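(* Let $\mathcal{T}$ be the law on $[0,\infty]$ with tail function $\overline{F}=\tfrac12\mathbf{1}_{[0,1)}+\tfrac14\mathbf{1}_{[1,\frac32)}+\tfrac16\mathbf{1}_{[\frac32,\infty)}$ (so $\mathcal{T}(\{0\})=\tfrac12$, $\mathcal{T}(\{1\})=\tfrac14$, $\mathcal{T}(\{\tfrac32\})=\tfrac1{12}$, $\mathcal{T}(\{\infty\})=\tfrac16$). Then $\mathcal{T}^{\mathrm{Exp}(\mu)}\leq_{\mathrm{st}}\mathcal{T}$ for all $\mu\in(0,\infty)$, but there exists a reset law $\mathcal{R}$ (indeed one of the form $\delta_r$, $r\in(0,\infty)$) such that $\mathcal{T}^{\mathcal{R}}\leq_{\mathrm{st}}\mathcal{T}$ fails.
   Context: A reset law is a probability law $\mathcal{R}$ on the Borel sets of $[0,\infty]$ with $\mathcal{R}((0,\infty])>0$ and $\mathcal{R}([0,\infty))>0$. Given a reset law $\mathcal{R}$: let $(T_k)$ be i.i.d. with law $\mathcal{T}$ and $(R_k)$ an independent i.i.d. sequence with law $\mathcal{R}$; $\mathcal{T}^{\mathcal{R}}$ is the law of $\tilde T$ defined a.s. by $\tilde T=R_1+\cdots+R_{k-1}+T_k$ on $\{R_1<T_1,\ldots,R_{k-1}<T_{k-1},T_k\leq R_k\}$, $k\in\mathbb{N}$. $\delta_r$ is the Dirac mass at $r$, $\mathrm{Exp}(\mu)$ the exponential law with mean $\mu^{-1}$. $\mathcal{A}\leq_{\mathrm{st}}\mathcal{B}$ means $\mathcal{A}((t,\infty])\leq\mathcal{B}((t,\infty])$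 for all $t\in[0,\infty)$. *)

(* Defs.v *)
From Stdlib Require Import Reals Lra List.
Open Scope R_scope.

Inductive Rbar : Type := Fin (x : R) | Inf.

Definition Rbar_lt (a b : Rbar) : Prop :=
  match a, b with
  | Fin x, Fin y => x < y
  | Fin _, Inf => True
  | Inf, _ => False
  end.

Definition Rbar_le (a b : Rbar) : Prop :=
  match a, b with
  | Fin x, Fin y => x <= y
  | _, Inf => True
  | Inf, Fin _ => False
  end.

Definition Rbar_plus (a b : Rbar) : Rbar :=
  match a, b with
  | Fin x, Fin y => Fin (x + y)
  | _, _ => Inf
  end.

Fixpoint Rbar_psum (f : nat -> Rbar) (k : nat) : Rbar :=
  match k with
  | O => Fin 0
  | S k' => Rbar_plus (Rbar_psum f k') (f k')
  end.

Record ProbSpace := {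
  Omega : Type;
  meas : (Omega -> Prop) -> Prop;
  Pr : (Omega -> Prop) -> R;
  meas_full : meas (fun _ => True);
  meas_compl : forall A, meas A -> meas (fun w => ~ A w);
  meas_union : forall A : nat -> Omega -> Prop,
      (forall n, meas (A n)) -> meas (fun w => exists n, A n w);
  Pr_nonneg : forall A, meas A -> 0 <= Pr A;
  Pr_full : Pr (fun _ => True) = 1;
  Pr_sigma_add : forall A : nat -> Omega -> Prop,
      (forall n, meas (A n)) ->
      (forall m n w, m <> n -> A m w -> A n w -> False) ->
      infinite_sum (fun n => Pr (A n)) (Pr (fun w => exists n, A n w))
}.

(* A [0,oo]-valued random variable (measurable w.r.t. the half-lines
   (t, oo], which generate the Borel sigma-algebra of [-oo..oo]). *)
Definition rv (S : ProbSpace) (X : Omega S -> Rbar) : Prop :=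
  forall t : R, meas S (fun w => Rbar_lt (Fin t) (X w)).

Definition has_tail (S : ProbSpace) (X : Omega S -> Rbar) (G : R -> R) : Prop :=
  Pr S (fun w => Rbar_lt (X w) (Fin 0)) = 0 /\
  forall t : R, 0 <= t -> Pr S (fun w => Rbar_lt (Fin t) (X w)) = G t.

(* Mutual independence of a family of random variables, tested on the
   pi-system generating their sigma-algebras: finite intersections of
   events {X_i > t_i} for distinct indices. *)
Definition indep {I : Type} (S : ProbSpace) (X : I -> Omega S -> Rbar) : Prop :=
  forall (l : list I) (th : I -> R), NoDup l ->
    Pr S (fun w => Forall (fun i => Rbar_lt (Fin (th i)) (X i w)) l) =
    fold_right Rmult 1 (map (fun i => Pr S (fun w => Rbar_lt (Fin (th i)) (X i w))) l).

Definition reset_setup (S : ProbSpace) (T Rs : nat -> Omega S -> Rbar)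
    (GT GR : R -> R) : Prop :=
  (forall k, rv S (T k)) /\ (forall k, rv S (Rs k)) /\
  (forall k, has_tail S (T k) GT) /\ (forall k, has_tail S (Rs k) GR) /\
  indep S (fun i : nat + nat => match i with inl k => T k | inr k => Rs k end).

(* The event {Ttilde > t}, where (a.s.) Ttilde = R_0+...+R_(k-1) + T_k on
   {R_0 < T_0, ..., R_(k-1) < T_(k-1), T_k <= R_k} (0-indexed). *)
Definition tilde_gt (S : ProbSpace) (T Rs : nat -> Omega S -> Rbar) (t : R)
    : Omega S -> Prop :=
  fun w => exists k : nat,
    (forall j, (j < k)%nat -> Rbar_lt (Rs j w) (T j w)) /\
    Rbar_le (T k w) (Rs k w) /\
    Rbar_lt (Fin t) (Rbar_plus (Rbar_psum (fun j => Rs j w) k) (T k w)).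

Definition tilde_st_le (S : ProbSpace) (T Rs : nat -> Omega S -> Rbar)
    (G : R -> R) : Prop :=
  forall t : R, 0 <= t -> Pr S (tilde_gt S T Rs t) <= G t.

Definition Tbar (t : R) : R :=
  if Rlt_dec t 1 then 1/2 else if Rlt_dec t (3/2) then 1/4 else 1/6.

Definition exp_tail (mu : R) (t : R) : R := exp (- mu * t).
Definition dirac_tail (r : R) (t : R) : R := if Rlt_dec t r then 1 else 0.

(* Main.v *)
Require Import Defs.
From Stdlib Require Import Reals Lra Lia List Bool ZArith Classical FunctionalExtensionality PropExtensionality.
Open Scope R_scope.


Section Basics.
Variable PS : ProbSpace.

Lemma pred_ext (P Q : Omega PS -> Prop) : (forall w, P w <-> Q w) -> P = Q.
Proof. intros H; apply functional_extensionality; intros w; apply propositional_extensionality; auto. Qed.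

Lemma meas_ext (P Q : Omega PS -> Prop) : (forall w, P w <-> Q w) -> meas PS P -> meas PS Q.
Proof. intros H; rewrite (pred_ext P Q H); auto. Qed.

Lemma Pr_ext (P Q : Omega PS -> Prop) : (forall w, P w <-> Q w) -> Pr PS P = Pr PS Q.
Proof. intros H; rewrite (pred_ext P Q H); auto. Qed.

Lemma meas_empty : meas PS (fun _ => False).
Proof. apply (meas_ext (fun w => ~ True)). tauto. apply meas_compl, meas_full. Qed.

Lemma meas_const (P : Prop) : meas PS (fun _ => P).
Proof. destruct (classic P) as [H|H].
  apply (meas_ext (fun _ => True)). tauto. apply meas_full.
  apply (meas_ext (fun _ => False)). tauto. apply meas_empty. Qed.

Lemma meas_or A B : meas PS A -> meas PS B -> meas PS (fun w => A w \/ B w).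
Proof. intros HA HB.
  apply (meas_ext (fun w => exists n, (match n with O => A | _ => B end) w)).
  intros w; split. intros [[|n] H]; auto. intros [H|H]. exists O; auto. exists 1%nat; auto.
  apply meas_union. intros [|n]; auto. Qed.

Lemma meas_and A B : meas PS A -> meas PS B -> meas PS (fun w => A w /\ B w).
Proof. intros HA HB.
  apply (meas_ext (fun w => ~ (~ A w \/ ~ B w))). intros w; tauto.
  apply meas_compl, meas_or; apply meas_compl; auto. Qed.

Lemma meas_not A : meas PS A -> meas PS (fun w => ~ A w).
Proof. apply meas_compl. Qed.

Lemma meas_ex (A : nat -> Omega PS -> Prop) : (forall n, meas PS (A n)) -> meas PS (fun w => exists n, A n w).
Proof. apply meas_union. Qed.

Lemma meas_all (A : nat -> Omega PS -> Prop) : (forall n, meas PS (A n)) -> meas PS (fun w => forall n, A n w).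
Proof. intros H. apply (meas_ext (fun w => ~ exists n, ~ A n w)).
  intros w; split. intros H1 n. apply NNPP; intros H2; apply H1; eauto. intros H1 [n Hn]; auto.
  apply meas_compl, meas_union; intros n; apply meas_compl; auto. Qed.

Lemma meas_forall_lt (A : nat -> Omega PS -> Prop) k : (forall n, meas PS (A n)) ->
  meas PS (fun w => forall j, (j < k)%nat -> A j w).
Proof. intros H; induction k.
  apply (meas_ext (fun _ => True)). intros w; split; intros; auto; lia. apply meas_full.
  apply (meas_ext (fun w => (forall j, (j < k)%nat -> A j w) /\ A k w)).
  intros w; split. intros [H1 H2] j Hj. destruct (Nat.eq_dec j k). subst; auto. apply H1; lia.
  intros H1; split; auto. apply meas_and; auto. Qed.

Lemma Pr_empty : Pr PS (fun _ => False) = 0.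
Proof.
  pose proof (Pr_sigma_add PS (fun _ _ => False) (fun _ => meas_empty) (fun _ _ _ _ H _ => H)) as H.
  cbv beta in H. rewrite (Pr_ext (fun w => exists _ : nat, False) (fun _ => False)) in H by (intros; split; [intros [_ []]|tauto]).
  set (c := Pr PS (fun _ => False)) in *.
  destruct (Req_dec c 0) as [E|E]; auto. exfalso.
  destruct (H (Rabs c / 2)) as [N HN]. apply Rabs_pos_lt in E; lra.
  assert (H1 := HN N (le_n _)). assert (H2 := HN (S N) (le_S _ _ (le_n _))).
  unfold Rdist in *. rewrite sum_cte in H1, H2.
  rewrite S_INR in H2.
  replace (c * (INR (S N) + 1) - c) with (c * INR (S N) - c + c) in H2 by ring.
  assert (Rabs c <= Rabs (c * INR (S N) - c + c) + Rabs (c * INR (S N) - c)).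
  { replace c with ((c * INR (S N) - c + c) - (c * INR (S N) - c)) at 1 by ring.
    eapply Rle_trans. apply Rabs_triang. rewrite Rabs_Ropp. lra. }
  apply Rabs_pos_lt in E; lra.
Qed.

Lemma Pr_add A B : meas PS A -> meas PS B -> (forall w, A w -> B w -> False) ->
  Pr PS (fun w => A w \/ B w) = Pr PS A + Pr PS B.
Proof. intros HA HB Hd.
  set (F := fun n => match n with O => A | 1%nat => B | _ => fun _ : Omega PS => False end).
  assert (HF : forall n, meas PS (F n)). { intros [|[|n]]; simpl; auto. apply meas_empty. }
  assert (HD : forall m n w, m <> n -> F m w -> F n w -> False).
  { intros [|[|m]] [|[|n]] w Hmn; simpl; try tauto; try lia. eauto. intros; eauto. }
  pose proof (Pr_sigma_add PS F HF HD) as H.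
  rewrite (Pr_ext (fun w => exists n, F n w) (fun w => A w \/ B w)) in H.
  2:{ intros w; split. intros [[|[|n]] Hn]; simpl in Hn; tauto. intros [H1|H1]; [exists O|exists 1%nat]; auto. }
  apply (uniqueness_sum _ _ _ H).
  intros eps Heps; exists 1%nat; intros n Hn. unfold Rdist.
  replace (sum_f_R0 (fun n => Pr PS (F n)) n) with (Pr PS A + Pr PS B).
  rewrite Rminus_diag, Rabs_R0; auto.
  induction n. lia. destruct (Nat.eq_dec n 0). subst; simpl; ring.
  simpl sum_f_R0. rewrite <- IHn by lia. destruct n. lia. simpl. rewrite Pr_empty; ring.
Qed.

Lemma Pr_le1 A : meas PS A -> Pr PS A <= 1.
Proof. intros HA. rewrite <- (Pr_full PS).
  rewrite (Pr_ext (fun _ => True) (fun w => A w \/ ~ A w)) by (intros; tauto).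
  rewrite Pr_add; auto. pose proof (Pr_nonneg PS _ (meas_compl PS A HA)); lra. apply meas_compl; auto. Qed.

Lemma Pr_compl A : meas PS A -> Pr PS (fun w => ~ A w) = 1 - Pr PS A.
Proof. intros HA. rewrite <- (Pr_full PS).
  rewrite (Pr_ext (fun _ => True) (fun w => A w \/ ~ A w)) by (intros; tauto).
  rewrite Pr_add; auto. ring. apply meas_compl; auto. Qed.

Lemma Pr_mono A B : meas PS A -> meas PS B -> (forall w, A w -> B w) -> Pr PS A <= Pr PS B.
Proof. intros HA HB H.
  rewrite (Pr_ext B (fun w => A w \/ (B w /\ ~ A w))).
  rewrite Pr_add; auto. pose proof (Pr_nonneg PS (fun w => B w /\ ~ A w)). 
  assert (0 <= Pr PS (fun w => B w /\ ~ A w)) by (apply Pr_nonneg, meas_and; auto; apply meas_compl; auto). lra.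
  apply meas_and; auto; apply meas_compl; auto. intros w ? []; tauto.
  intros w; split. intros HB'; destruct (classic (A w)); auto. intros [|[]]; auto. Qed.

Lemma Pr_diff A B : meas PS A -> meas PS B -> (forall w, B w -> A w) ->
  Pr PS (fun w => A w /\ ~ B w) = Pr PS A - Pr PS B.
Proof. intros HA HB H.
  rewrite (Pr_ext A (fun w => B w \/ (A w /\ ~ B w))).
  rewrite Pr_add; auto. ring. apply meas_and; auto; apply meas_compl; auto. intros w ? []; tauto.
  intros w; split. intros HA'; destruct (classic (B w)); auto. intros [|[]]; auto. Qed.

End Basics.


Definition D (a b c : nat) : R := (INR a - INR b) / (INR c + 1).

Lemma IZR_split z : IZR z = INR (Z.to_nat z) - INR (Z.to_nat (- z)).
Proof. destruct (Z_le_gt_dec 0 z).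
  replace (Z.to_nat (-z)) with 0%nat by lia. simpl. rewrite INR_IZR_INZ, Z2Nat.id by lia. ring.
  replace (Z.to_nat z) with 0%nat by lia. simpl. rewrite INR_IZR_INZ, Z2Nat.id by lia. rewrite opp_IZR. ring. Qed.

Lemma dense x y : x < y -> exists a b c, x < D a b c < y.
Proof. intros Hxy. destruct (archimed_cor1 (y - x)) as [N [HN HN0]]; [lra|].
  assert (HNp : 0 < INR N) by (apply lt_0_INR; lia).
  destruct (archimed (x * INR N)) as [H1 H2].
  set (z := up (x * INR N)) in *.
  exists (Z.to_nat z), (Z.to_nat (-z)), (N - 1)%nat. unfold D. rewrite <- IZR_split.
  replace (INR (N - 1) + 1) with (INR N) by (rewrite minus_INR by lia; simpl; ring).
  split. apply Rmult_lt_reg_r with (INR N); auto. unfold Rdiv; rewrite Rmult_assoc, Rinv_l; lra.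
  apply Rmult_lt_reg_r with (INR N); auto. unfold Rdiv; rewrite Rmult_assoc, Rinv_l by lra.
  apply Rmult_lt_compat_r with (r := INR N) in HN; auto. rewrite Rinv_l in HN by lra. lra.
Qed.

Section RbarMeas.
Variable PS : ProbSpace.

Definition rv' (X : Omega PS -> Rbar) := forall t : R, meas PS (fun w => Rbar_lt (Fin t) (X w)).

Lemma meas_ex3 (A : nat -> nat -> nat -> Omega PS -> Prop) :
  (forall a b c, meas PS (A a b c)) -> meas PS (fun w => exists a b c, A a b c w).
Proof. intros H. apply meas_ex; intros a. apply meas_ex; intros b. apply meas_ex; intros c. auto. Qed.

Lemma meas_lt_const X a : rv' X -> meas PS (fun w => Rbar_lt (X w) (Fin a)).
Proof. intros HX.
  apply (meas_ext PS (fun w => ~ forall n : nat, Rbar_lt (Fin (a - / (INR n + 1))) (X w))).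
  2:{ apply meas_compl, meas_all; auto. }
  intros w; destruct (X w) as [x|]; simpl; split.
  - intros H. apply not_all_ex_not in H. destruct H as [n Hn].
    assert (0 < / (INR n + 1)) by (apply Rinv_0_lt_compat; pose proof (pos_INR n); lra). lra.
  - intros H H1. destruct (archimed_cor1 (a - x)) as [N [HN HN0]]; [lra|].
    specialize (H1 (N - 1)%nat). rewrite minus_INR in H1 by lia. simpl in H1.
    replace (INR N - 1 + 1) with (INR N) in H1 by ring. lra.
  - intros H; exfalso; apply H; intros; exact I.
  - intros [].
Qed.


Lemma meas_lt X Y : rv' X -> rv' Y -> meas PS (fun w => Rbar_lt (X w) (Y w)).
Proof. intros HX HY.
  apply (meas_ext PS (fun w => exists a b c, Rbar_lt (X w) (Fin (D a b c)) /\ Rbar_lt (Fin (D a b c)) (Y w))).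
  2:{ apply meas_ex3; intros; apply meas_and; auto. apply meas_lt_const; auto. }
  intros w; destruct (X w) as [x|], (Y w) as [y|]; simpl; split.
  - intros (a & b & c & H1 & H2); lra.
  - intros H; destruct (dense x y H) as (a & b & c & H1); exists a, b, c; lra.
  - auto.
  - intros _; destruct (dense x (x+1)) as (a & b & c & H1); [lra|]; exists a, b, c; split; [lra|exact I].
  - intros (a & b & c & [] & _).
  - intros [].
  - intros (a & b & c & [] & _).
  - intros [].
Qed.

Lemma Rbar_le_not_lt a b : Rbar_le a b <-> ~ Rbar_lt b a.
Proof. destruct a, b; simpl; split; intros; try lra; auto. Qed.

Lemma meas_le X Y : rv' X -> rv' Y -> meas PS (fun w => Rbar_le (X w) (Y w)).
Proof. intros HX HY. apply (meas_ext PS (fun w => ~ Rbar_lt (Y w) (X w))).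
  intros w; rewrite Rbar_le_not_lt; tauto. apply meas_compl, meas_lt; auto. Qed.

Lemma rv_const c : rv' (fun _ => c).
Proof. intros t; apply meas_const. Qed.

Lemma rv_plus X Y : rv' X -> rv' Y -> rv' (fun w => Rbar_plus (X w) (Y w)).
Proof. intros HX HY t.
  apply (meas_ext PS (fun w => exists a b c, Rbar_lt (Fin (D a b c)) (X w) /\ Rbar_lt (Fin (t - D a b c)) (Y w))).
  2:{ apply meas_ex3; intros; apply meas_and; auto. }
  intros w; destruct (X w) as [x|], (Y w) as [y|]; simpl; split.
  - intros (a & b & c & H1 & H2); lra.
  - intros H; destruct (dense (t - y) x) as (a & b & c & H1); [lra|]; exists a, b, c; lra.
  - auto.
  - intros _; destruct (dense (x-1) x) as (a & b & c & H1); [lra|]; exists a, b, c; split; [lra|exact I].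
  - auto.
  - intros _; destruct (dense (t-y) (t-y+1)) as (a & b & c & H1); [lra|]; exists a, b, c; split; [exact I|lra].
  - auto.
  - intros _; exists O, O, O; split; exact I.
Qed.

Lemma rv_psum (F : nat -> Omega PS -> Rbar) k : (forall j, rv' (F j)) -> rv' (fun w => Rbar_psum (fun j => F j w) k).
Proof. intros H; induction k; simpl. apply rv_const. apply rv_plus; auto. Qed.

Lemma meas_tilde (T Rs : nat -> Omega PS -> Rbar) t : (forall k, rv' (T k)) -> (forall k, rv' (Rs k)) ->
  meas PS (tilde_gt PS T Rs t).
Proof. intros HT HR. unfold tilde_gt. apply meas_ex; intros k.
  apply meas_and. apply meas_forall_lt; intros; apply meas_lt; auto.
  apply meas_and. apply meas_le; auto. apply rv_plus; auto. apply rv_psum; auto. Qed.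

End RbarMeas.


Definition I_eq_dec : forall i j : nat + nat, {i = j} + {i <> j}.
Proof. decide equality; apply Nat.eq_dec. Defined.

Definition posb (o : option R) (x : Rbar) : Prop := match o with None => True | Some a => Rbar_lt (Fin a) x end.
Definition negb' (o : option R) (x : Rbar) : Prop := match o with None => True | Some b => ~ Rbar_lt (Fin b) x end.
Definition atom (lo hi : option R) (x : Rbar) : Prop := posb lo x /\ negb' hi x.
Definition maxo (lo : option R) (b : R) : R := match lo with None => b | Some a => Rmax a b end.

Lemma posb_max lo b x : posb (Some (maxo lo b)) x <-> posb lo x /\ Rbar_lt (Fin b) x.
Proof. destruct lo as [a|]; simpl. 2: tauto. destruct x as [x|]; simpl. 2: tauto.
  split. intros H; split; eapply Rle_lt_trans; eauto. apply Rmax_l. apply Rmax_r.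
  intros [H1 H2]; apply Rmax_lub_lt; auto. Qed.

Section Prod.
Variable PS : ProbSpace.
Variable X : nat + nat -> Omega PS -> Rbar.
Hypothesis HX : forall i, rv' PS (X i).
Hypothesis Hind : indep PS X.

Definition pr i a := Pr PS (fun w => Rbar_lt (Fin a) (X i w)).
Definition posv i (o : option R) := match o with None => 1 | Some a => pr i a end.
Definition atomP i lo hi := posv i lo - match hi with None => 0 | Some b => pr i (maxo lo b) end.

Lemma meas_Forall {A} (P : A -> Omega PS -> Prop) l : (forall i, meas PS (P i)) -> meas PS (fun w => Forall (fun i => P i w) l).
Proof. intros H; induction l.
  apply (meas_ext PS (fun _ => True)). intros; split; auto. apply meas_full.
  apply (meas_ext PS (fun w => P a w /\ Forall (fun i => P i w) l)). intros w; rewrite Forall_cons_iff; tauto.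
  apply meas_and; auto. Qed.

Lemma meas_posb i o : meas PS (fun w => posb o (X i w)).
Proof. destruct o; simpl. apply HX. apply meas_full. Qed.
Lemma meas_negb i o : meas PS (fun w => negb' o (X i w)).
Proof. destruct o; simpl. apply meas_compl, HX. apply meas_full. Qed.
Lemma meas_atom i lo hi : meas PS (fun w => atom lo hi (X i w)).
Proof. apply meas_and. apply meas_posb. apply meas_negb. Qed.

Definition FL (L : list (nat+nat)) th w := Forall (fun i => Rbar_lt (Fin (th i)) (X i w)) L.
Definition FM (M : list (nat+nat)) lo hi w := Forall (fun i => atom (lo i) (hi i) (X i w)) M.

Lemma meas_FL L th : meas PS (FL L th).
Proof. apply (meas_Forall (fun i w => Rbar_lt (Fin (th i)) (X i w))). intros; apply HX. Qed.
Lemma meas_FM M lo hi : meas PS (FM M lo hi).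
Proof. apply (meas_Forall (fun i w => atom (lo i) (hi i) (X i w))). intros; apply meas_atom. Qed.

Definition prodL L th := fold_right Rmult 1 (map (fun i => pr i (th i)) L).
Definition prodM M lo hi := fold_right Rmult 1 (map (fun i => atomP i (lo i) (hi i)) M).

Lemma prod_formula : forall M L th lo hi, NoDup (L ++ M) ->
  Pr PS (fun w => FL L th w /\ FM M lo hi w) = prodL L th * prodM M lo hi.
Proof.
  induction M as [|i M IH]; intros L th lo hi Hnd.
  - unfold prodM; simpl. rewrite Rmult_1_r. rewrite app_nil_r in Hnd.
    rewrite (Pr_ext PS _ (FL L th)). apply Hind; auto.
    intros w; unfold FM; split; [tauto|]; split; auto.
  - assert (Hni : ~ In i (L ++ M)) by (apply NoDup_remove_2; auto).
    assert (Hnd' : NoDup (L ++ M)) by (eapply NoDup_remove_1; eauto).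
    assert (Hnd2 : NoDup ((i :: L) ++ M)) by (simpl; constructor; auto).
    assert (HiL : ~ In i L) by (intros H; apply Hni, in_or_app; auto).
    assert (Sx : forall o, Pr PS (fun w => FL L th w /\ posb o (X i w) /\ FM M lo hi w) =
                 posv i o * prodL L th * prodM M lo hi).
    { intros [a|].
      - set (th' := fun j => if I_eq_dec j i then a else th j).
        assert (Eth : forall j, In j L -> th' j = th j).
        { intros j Hj; unfold th'; destruct (I_eq_dec j i); auto. subst; tauto. }
        rewrite (Pr_ext PS _ (fun w => FL (i :: L) th' w /\ FM M lo hi w)).
        rewrite IH by auto. unfold prodL; simpl. unfold th' at 1. destruct (I_eq_dec i i); [|tauto].
        rewrite (map_ext_in _ (fun j => pr j (th j)) L). simpl; ring.
        intros j Hj; rewrite Eth; auto.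
        intros w; unfold FL; rewrite Forall_cons_iff. unfold th' at 1. destruct (I_eq_dec i i); [|tauto].
        simpl. 
        assert (Forall (fun j => Rbar_lt (Fin (th j)) (X j w)) L <-> Forall (fun j => Rbar_lt (Fin (th' j)) (X j w)) L).
        { rewrite !Forall_forall; split; intros H j Hj; specialize (H j Hj); rewrite Eth in *; auto. }
        tauto.
      - simpl. rewrite (Pr_ext PS _ (fun w => FL L th w /\ FM M lo hi w)). rewrite IH by auto. ring.
        intros; simpl; tauto. }
    unfold prodM; simpl; fold (prodM M lo hi).
    unfold atomP. destruct (hi i) as [b|] eqn:Ehi.
    + rewrite (Pr_ext PS _ (fun w => (FL L th w /\ posb (lo i) (X i w) /\ FM M lo hi w) /\
               ~ (FL L th w /\ posb (Some (maxo (lo i) b)) (X i w) /\ FM M lo hi w))).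
      rewrite Pr_diff. rewrite !Sx. simpl. ring.
      * apply meas_and. apply meas_FL. apply meas_and. apply meas_posb. apply meas_FM.
      * apply meas_and. apply meas_FL. apply meas_and. apply meas_posb. apply meas_FM.
      * intros w [H1 [H2 H3]]. rewrite posb_max in H2. tauto.
      * intros w. unfold FM at 1. rewrite Forall_cons_iff. unfold atom. rewrite Ehi. rewrite posb_max. simpl. tauto.
    + rewrite (Pr_ext PS _ (fun w => FL L th w /\ posb (lo i) (X i w) /\ FM M lo hi w)).
      rewrite Sx. ring.
      intros w. unfold FM at 1. rewrite Forall_cons_iff. unfold atom. rewrite Ehi. simpl. tauto.
Qed.

Lemma box_prob M lo hi : NoDup M -> Pr PS (FM M lo hi) = prodM M lo hi.
Proof. intros H. rewrite (Pr_ext PS _ (fun w => FL nil (fun _ => 0) w /\ FM M lo hi w)).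
  rewrite prod_formula; auto. unfold prodL; simpl; ring.
  intros; unfold FL; split; auto. intros [_ ?]; auto. Qed.

End Prod.


Definition Q : Type := ((option R * option R) * (option R * option R))%type.
Definition dq : Q := ((None, None), (None, None)).
Definition idxs (n : nat) : list (nat + nat) := flat_map (fun j => inl j :: inr j :: nil) (seq 0 n).
Definition lo_of (qs : list Q) (i : nat + nat) : option R :=
  match i with inl j => fst (fst (nth j qs dq)) | inr j => fst (snd (nth j qs dq)) end.
Definition hi_of (qs : list Q) (i : nat + nat) : option R :=
  match i with inl j => snd (fst (nth j qs dq)) | inr j => snd (snd (nth j qs dq)) end.

Lemma in_idxs i n : In i (idxs n) <-> match i with inl j => (j < n)%nat | inr j => (j < n)%nat end.
Proof. unfold idxs. rewrite in_flat_map. split.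
  intros [j [Hj Hi]]. apply in_seq in Hj. simpl in Hi. destruct Hi as [<-|[<-|[]]]; lia.
  destruct i as [j|j]; intros H; exists j; rewrite in_seq; simpl; split; auto; lia. Qed.

Lemma idxs_S n : idxs (S n) = idxs n ++ inl n :: inr n :: nil.
Proof. unfold idxs. rewrite seq_S, flat_map_app. simpl. auto. Qed.

Lemma NoDup_idxs n : NoDup (idxs n).
Proof. induction n. constructor. rewrite idxs_S. apply NoDup_app; auto.
  constructor. simpl. intros [H|[]]; discriminate. constructor. simpl; tauto. constructor.
  intros x H1 H2. apply in_idxs in H1. simpl in H2. destruct H2 as [<-|[<-|[]]]; lia. Qed.

Lemma Forall_idxs (P : nat + nat -> Prop) n : Forall P (idxs n) <-> forall j, (j < n)%nat -> P (inl j) /\ P (inr j).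
Proof. rewrite Forall_forall. split.
  intros H j Hj; split; apply H; apply in_idxs; auto.
  intros H [j|j] Hi; apply in_idxs in Hi; apply H; auto. Qed.

Fixpoint prodl (l : list R) : R := match l with nil => 1 | x :: l => x * prodl l end.

Lemma prodl_app l1 l2 : prodl (l1 ++ l2) = prodl l1 * prodl l2.
Proof. induction l1; simpl. ring. rewrite IHl1; ring. Qed.

Lemma prodl_fold l : fold_right Rmult 1 l = prodl l.
Proof. induction l; simpl; auto; rewrite IHl; auto. Qed.

Lemma prod_idxs (F : nat + nat -> R) n :
  prodl (map F (idxs n)) = prodl (map (fun j => F (inl j) * F (inr j)) (seq 0 n)).
Proof. induction n. auto. rewrite idxs_S, seq_S, !map_app, !prodl_app, IHn. simpl. ring. Qed.

Lemma map_nth_seq {A B} (g : A -> B) (l : list A) d : map (fun j => g (nth j l d)) (seq 0 (length l)) = map g l.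
Proof. induction l; simpl; auto. f_equal. rewrite <- seq_shift, map_map. simpl. auto. Qed.

Section Boxes.
Variable PS : ProbSpace.
Variable X : nat + nat -> Omega PS -> Rbar.
Hypothesis HX : forall i, rv' PS (X i).
Hypothesis Hind : indep PS X.

Definition bev (qs : list Q) : Omega PS -> Prop := FM PS X (idxs (length qs)) (lo_of qs) (hi_of qs).

Lemma bev_iff qs w : bev qs w <-> forall j, (j < length qs)%nat ->
   atom (fst (fst (nth j qs dq))) (snd (fst (nth j qs dq))) (X (inl j) w) /\
   atom (fst (snd (nth j qs dq))) (snd (snd (nth j qs dq))) (X (inr j) w).
Proof. unfold bev, FM. rewrite (Forall_idxs (fun i => atom (lo_of qs i) (hi_of qs i) (X i w))). simpl. tauto. Qed.

Lemma meas_bev qs : meas PS (bev qs).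
Proof. apply meas_FM; auto. Qed.

Lemma bev_prob qs (v : Q -> R) :
  (forall j, (j < length qs)%nat ->
     atomP PS X (inl j) (fst (fst (nth j qs dq))) (snd (fst (nth j qs dq))) *
     atomP PS X (inr j) (fst (snd (nth j qs dq))) (snd (snd (nth j qs dq))) = v (nth j qs dq)) ->
  Pr PS (bev qs) = prodl (map v qs).
Proof. intros H. unfold bev. rewrite box_prob; auto. 2: apply NoDup_idxs.
  unfold prodM. rewrite prodl_fold, prod_idxs. simpl.
  rewrite <- (map_nth_seq v qs dq). f_equal. apply map_ext_in. intros j Hj. apply in_seq in Hj. apply H; lia. Qed.

End Boxes.


Fixpoint csum (c : nat -> R) (m : nat) : R := match m with O => 0 | S k => csum c k + c k end.

Lemma csum_mono c k m : (forall j, (j < m)%nat -> 0 <= c j) -> (k <= m)%nat -> csum c k <= csum c m.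
Proof. intros H Hkm. induction Hkm as [|m' Hkm IH]. lra. simpl. assert (0 <= c m') by (apply H; lia). 
  assert (csum c k <= csum c m') by (apply IH; intros; apply H; lia). lra. Qed.

Lemma Rbar_le_fin a b c : Rbar_le a b -> Rbar_le b (Fin c) -> exists x, a = Fin x /\ x <= c.
Proof. destruct a as [x|], b as [y|]; simpl; try tauto. intros; exists x; split; auto; lra. Qed.

Section Key.
Variable PS : ProbSpace.
Variables T Rs : nat -> Omega PS -> Rbar.

Lemma psum_bound w m c : (forall j, (j < m)%nat -> Rbar_le (Rs j w) (Fin (c j))) ->
  forall k, (k <= m)%nat -> exists s, Rbar_psum (fun j => Rs j w) k = Fin s /\ s <= csum c k.
Proof. intros H k. induction k; intros Hk. exists 0; simpl; split; auto; lra.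
  destruct IHk as [s [E1 E2]]; [lia|]. 
  assert (H1 := H k ltac:(lia)). destruct (Rs k w) as [r|] eqn:Er; simpl in H1; [|tauto].
  exists (s + r). simpl. rewrite E1, Er. simpl. split; auto. lra. Qed.

Lemma key w t m c d :
  (forall j, (j < m)%nat -> Rbar_le (Rs j w) (Fin (c j))) ->
  (forall j, (j < m)%nat -> 0 <= c j) -> 0 <= d ->
  Rbar_le (T m w) (Rs m w) -> Rbar_le (T m w) (Fin d) ->
  csum c m + d <= t -> ~ tilde_gt PS T Rs t w.
Proof. intros Hc Hc0 Hd HTR HTd Hsum [k [H1 [H2 H3]]].
  destruct (Compare_dec.lt_eq_lt_dec k m) as [[Hlt|Heq]|Hgt].
  - destruct (psum_bound w m c Hc k ltac:(lia)) as [s [E1 E2]].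
    destruct (Rbar_le_fin _ _ _ H2 (Hc k Hlt)) as [x [Ex Hx]].
    rewrite E1, Ex in H3. simpl in H3.
    assert (csum c (S k) <= csum c m) by (apply csum_mono; auto).
    simpl in H. lra.
  - subst k. destruct (psum_bound w m c Hc m ltac:(lia)) as [s [E1 E2]].
    destruct (T m w) as [x|]; simpl in HTd; [|tauto]. rewrite E1 in H3; simpl in H3. lra.
  - specialize (H1 m Hgt). apply Rbar_le_not_lt in HTR. tauto.
Qed.

End Key.

Section Union.
Variable PS : ProbSpace.

Lemma Pr_union {B} (E : B -> Omega PS -> Prop) (l : list B) :
  (forall b, meas PS (E b)) ->
  ForallOrdPairs (fun b1 b2 => forall w, E b1 w -> E b2 w -> False) l ->
  Pr PS (fun w => Exists (fun b => E b w) l) = fold_right Rplus 0 (map (fun b => Pr PS (E b)) l).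
Proof. intros HE H. induction l as [|b l IH].
  - simpl. rewrite (Pr_ext PS _ (fun _ => False)). apply Pr_empty. intros w; split; [intros H1; inversion H1|tauto].
  - inversion H as [|? ? Hb Hl]; subst. simpl. rewrite <- IH by auto.
    rewrite (Pr_ext PS _ (fun w => E b w \/ Exists (fun b => E b w) l)).
    apply Pr_add; auto. apply (meas_ext PS (fun w => exists n, match nth_error l n with Some b' => E b' w | None => False end)).
    { intros w; rewrite Exists_exists. split. intros [n Hn]. destruct (nth_error l n) eqn:En; [|tauto]. exists b0; split; auto. eapply nth_error_In; eauto.
      intros [x [Hx Ex]]. apply In_nth_error in Hx. destruct Hx as [n Hn]. exists n. rewrite Hn; auto. }
    apply meas_ex; intros n. destruct (nth_error l n); auto. apply meas_empty.
    intros w H1 H2. rewrite Exists_exists in H2. destruct H2 as [x [Hx Ex]]. rewrite Forall_forall in Hb. eapply Hb; eauto.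
    intros w. rewrite Exists_cons. tauto.
Qed.
End Union.


Inductive Opt := R1 | R2 | R3 | S0 | S1 | S2.
Definition O_eq_dec (a b : Opt) : {a = b} + {a <> b}.
Proof. decide equality. Defined.
Definition Box : Type := (list Opt * Opt)%type.  (* resets, then success *)
Definition ol (b : Box) : list Opt := fst b ++ snd b :: nil.

Definition oquad (o : Opt) : Q :=
  match o with
  | S0 => ((None, Some 0), (Some 0, None))
  | S1 => ((Some 0, Some 1), (Some 1, None))
  | S2 => ((Some 1, Some (3/2)), (Some (3/2), None))
  | R1 => ((Some 0, None), (Some 0, Some (1/2)))
  | R2 => ((Some 0, None), (Some (1/2), Some 1))
  | R3 => ((Some 1, None), (Some 1, Some (3/2)))
  end.
Definition quads (b : Box) : list Q := map oquad (ol b).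

Definition isR (o : Opt) : bool := match o with R1 | R2 | R3 => true | _ => false end.
Definition ocost (o : Opt) : R :=
  match o with R1 => 1/2 | R2 => 1 | R3 => 3/2 | S0 => 0 | S1 => 1 | S2 => 3/2 end.
Definition bcost (b : Box) : R := fold_right Rplus 0 (map ocost (fst b)) + ocost (snd b).
Definition bwf (b : Box) : Prop := forallb isR (fst b) = true /\ isR (snd b) = false.

Definition qatom (q : Q) (t r : Rbar) : Prop :=
  atom (fst (fst q)) (snd (fst q)) t /\ atom (fst (snd q)) (snd (snd q)) r.

Lemma incompat o1 o2 t r : o1 <> o2 -> qatom (oquad o1) t r -> qatom (oquad o2) t r -> False.
Proof. intros Hne. destruct o1, o2; try congruence; clear Hne;
  unfold qatom, atom, posb, negb'; simpl; destruct t, r; simpl; lra. Qed.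

Lemma oR_bound o t r : isR o = true -> qatom (oquad o) t r -> Rbar_le r (Fin (ocost o)).
Proof. destruct o; simpl; try discriminate; intros _; unfold qatom, atom, posb, negb'; simpl;
  destruct r; simpl; lra. Qed.

Lemma oS_bound o t r : isR o = false -> qatom (oquad o) t r -> Rbar_le t r /\ Rbar_le t (Fin (ocost o)).
Proof. destruct o; simpl; try discriminate; intros _; unfold qatom, atom, posb, negb'; simpl;
  destruct t, r; simpl; lra. Qed.

Lemma ocost_nn o : 0 <= ocost o.
Proof. destruct o; simpl; lra. Qed.

Lemma csum_list (f : Opt -> R) (l : list Opt) d :
  csum (fun j => f (nth j l d)) (length l) = fold_right Rplus 0 (map f l).
Proof. 
  assert (Hs : forall c m, csum c (S m) = c 0%nat + csum (fun j => c (S j)) m).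
  { intros c m; induction m. simpl; ring. simpl in *. rewrite IHm. ring. }
  induction l. simpl; auto. change (length (a :: l)) with (S (length l)). rewrite Hs. simpl. rewrite IHl. auto. Qed.

Lemma nth_quads b j : (j < length (ol b))%nat -> nth j (quads b) dq = oquad (nth j (ol b) S0).
Proof. intros H. unfold quads. rewrite (nth_indep _ dq (oquad S0)) by (rewrite length_map; auto).
  apply map_nth. Qed.

Lemma len_ol b : length (ol b) = S (length (fst b)).
Proof. unfold ol. rewrite length_app. simpl. lia. Qed.

Lemma nth_ol1 b j : (j < length (fst b))%nat -> nth j (ol b) S0 = nth j (fst b) S0.
Proof. intros; unfold ol; apply app_nth1; auto. Qed.
Lemma nth_ol2 b : nth (length (fst b)) (ol b) S0 = snd b.
Proof. unfold ol. rewrite app_nth2 by lia. rewrite Nat.sub_diag. auto. Qed.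

Lemma box_diff (b1 b2 : Box) : bwf b1 -> bwf b2 -> b1 <> b2 ->
  exists j, (j < length (ol b1))%nat /\ (j < length (ol b2))%nat /\ nth j (ol b1) S0 <> nth j (ol b2) S0.
Proof. destruct b1 as [rs1 s1], b2 as [rs2 s2]. unfold bwf, ol; simpl.
  revert rs2. induction rs1 as [|r1 rs1 IH]; intros [|r2 rs2] [H1 H1'] [H2 H2'] Hne; simpl in *.
  - exists 0%nat; simpl; repeat split; try lia. congruence.
  - exists 0%nat; simpl; repeat split; try lia. intros E; subst. apply andb_true_iff in H2. destruct H2; congruence.
  - exists 0%nat; simpl; repeat split; try lia. intros E; subst. apply andb_true_iff in H1. destruct H1; congruence.
  - apply andb_true_iff in H1; apply andb_true_iff in H2.
    destruct (O_eq_dec r1 r2) as [E|E].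
    + subst. destruct (IH rs2) as [j [Hj1 [Hj2 Hj3]]]; try tauto. congruence.
      exists (S j); simpl; repeat split; auto; lia.
    + exists 0%nat; simpl; repeat split; auto; lia.
Qed.

Definition tailv (G : R -> R) (lo hi : option R) : R :=
  (match lo with None => 1 | Some a => G a end) - (match hi with None => 0 | Some b => G (maxo lo b) end).
Definition nn (o : option R) : Prop := match o with None => True | Some a => 0 <= a end.

Lemma FOP_impl {A} (P P' : A -> A -> Prop) l : (forall a b, In a l -> In b l -> P a b -> P' a b) -> ForallOrdPairs P l -> ForallOrdPairs P' l.
Proof. intros H H1. induction H1 as [|a l Ha Hl IH]; constructor.
  - rewrite Forall_forall in *. intros x Hx. apply H; simpl; auto.
  - apply IH. intros; apply H; simpl; auto. Qed.

Section Part1.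
Variable PS : ProbSpace.
Variables T Rs : nat -> Omega PS -> Rbar.
Variable mu : R.
Hypothesis Hmu : 0 < mu.
Hypothesis Hset : reset_setup PS T Rs Tbar (exp_tail mu).
Let X := fun i : nat + nat => match i with inl k => T k | inr k => Rs k end.

Lemma HX : forall i, rv' PS (X i).
Proof. destruct Hset as [H1 [H2 _]]. intros [k|k]; simpl; auto. apply H1. apply H2. Qed.
Lemma Hind : indep PS X.
Proof. apply Hset. Qed.

Lemma safe b w t : bwf b -> bcost b <= t -> bev PS X (quads b) w -> ~ tilde_gt PS T Rs t w.
Proof. intros Hwf Hc Hb. rewrite bev_iff in Hb. unfold quads in Hb. rewrite length_map in Hb.
  destruct b as [rs s]. destruct Hwf as [Hw1 Hw2]. simpl in *.
  assert (Hat : forall j, (j < length (ol (rs, s)))%nat -> qatom (oquad (nth j (ol (rs, s)) S0)) (T j w) (Rs j w)).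
  { intros j Hj. rewrite <- nth_quads by auto. apply Hb; auto. }
  apply (key PS T Rs w t (length rs) (fun j => ocost (nth j rs S0)) (ocost s)).
  - intros j Hj. assert (H := Hat j). rewrite len_ol, nth_ol1 in H by (simpl; lia). simpl in H.
    apply (oR_bound _ (T j w)). rewrite forallb_forall in Hw1. apply Hw1. apply nth_In; auto. apply H; lia.
  - intros; apply ocost_nn.
  - apply ocost_nn.
  - assert (H := Hat (length rs)). rewrite len_ol in H. specialize (H ltac:(simpl; lia)).
    pose proof (nth_ol2 (rs, s)) as E. cbn [fst snd] in E. rewrite E in H. exact (proj1 (oS_bound s _ _ Hw2 H)).
  - assert (H := Hat (length rs)). rewrite len_ol in H. specialize (H ltac:(simpl; lia)).
    pose proof (nth_ol2 (rs, s)) as E. cbn [fst snd] in E. rewrite E in H. exact (proj2 (oS_bound s _ _ Hw2 H)).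
  - rewrite csum_list. unfold bcost in Hc; simpl in Hc. lra.
Qed.

Lemma bound (fam : list Box) t : Forall bwf fam -> Forall (fun b => bcost b <= t) fam ->
  ForallOrdPairs (fun b1 b2 => b1 <> b2) fam ->
  Pr PS (tilde_gt PS T Rs t) <= 1 - fold_right Rplus 0 (map (fun b => Pr PS (bev PS X (quads b))) fam).
Proof. intros Hwf Hc Hd.
  assert (Hm : meas PS (tilde_gt PS T Rs t)).
  { destruct Hset as [H1 [H2 _]]. apply meas_tilde; auto. }
  assert (HmU : meas PS (fun w => Exists (fun b => bev PS X (quads b) w) fam)).
  { apply (meas_ext PS (fun w => exists n, match nth_error fam n with Some b => bev PS X (quads b) w | None => False end)).
    { intros w; rewrite Exists_exists. split. intros [n Hn]. destruct (nth_error fam n) eqn:En; [|tauto]. exists b; split; auto. eapply nth_error_In; eauto.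
      intros [x [Hx Ex]]. apply In_nth_error in Hx. destruct Hx as [n Hn]. exists n. rewrite Hn; auto. }
    apply meas_ex; intros n. destruct (nth_error fam n). apply meas_bev, HX. apply meas_empty. }
  rewrite <- (Pr_union PS (fun b => bev PS X (quads b))).
  - assert (Pr PS (fun w => tilde_gt PS T Rs t w \/ Exists (fun b => bev PS X (quads b) w) fam) <= 1) by (apply Pr_le1, meas_or; auto).
    rewrite Pr_add in H; auto. lra.
    intros w H1 H2. rewrite Exists_exists in H2. destruct H2 as [b [Hb1 Hb2]].
    rewrite Forall_forall in Hwf, Hc. eapply safe; eauto.
  - intros; apply meas_bev, HX.
  - eapply FOP_impl; [|apply Hd]. intros b1 b2 Hb1 Hb2 Hne w H1 H2.
    rewrite Forall_forall in Hwf.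
    destruct (box_diff b1 b2) as [j [Hj1 [Hj2 Hj3]]]; auto.
    rewrite bev_iff in H1, H2. replace (length (quads b1)) with (length (ol b1)) in H1 by (unfold quads; rewrite length_map; auto). replace (length (quads b2)) with (length (ol b2)) in H2 by (unfold quads; rewrite length_map; auto).
    specialize (H1 j Hj1). specialize (H2 j Hj2). rewrite nth_quads in H1, H2 by auto.
    apply (incompat _ _ (T j w) (Rs j w) Hj3); auto.
Qed.

Lemma prT j a : 0 <= a -> pr PS X (inl j) a = Tbar a.
Proof. intros Ha. destruct Hset as [_ [_ [H _]]]. apply (H j). auto. Qed.
Lemma prR j a : 0 <= a -> pr PS X (inr j) a = exp_tail mu a.
Proof. intros Ha. destruct Hset as [_ [_ [_ [H _]]]]. apply (H j). auto. Qed.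

Lemma atomP_tail i G lo hi : (forall a, 0 <= a -> pr PS X i a = G a) -> nn lo -> nn hi ->
  atomP PS X i lo hi = tailv G lo hi.
Proof. intros H Hlo Hhi. unfold atomP, tailv, posv. destruct lo as [a|]; destruct hi as [b|]; simpl in *;
  rewrite ?H; auto. unfold Rmax; destruct (Rle_dec a b); lra. Qed.

Definition vq (q : Q) : R := tailv Tbar (fst (fst q)) (snd (fst q)) * tailv (exp_tail mu) (fst (snd q)) (snd (snd q)).

Lemma box_pr b : Pr PS (bev PS X (quads b)) = prodl (map (fun o => vq (oquad o)) (ol b)).
Proof. rewrite (bev_prob PS X HX Hind (quads b) vq). unfold quads; rewrite map_map; auto.
  intros j Hj. replace (length (quads b)) with (length (ol b)) in Hj by (unfold quads; rewrite length_map; auto).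
  rewrite nth_quads by auto. destruct (nth j (ol b) S0); unfold vq; cbn [oquad fst snd];
  idtac.
  all: f_equal; apply atomP_tail; simpl; intros; try apply prT; try apply prR; auto; lra.
Qed.

Definition xv (x : R) (o : Opt) : R :=
  match o with
  | S0 => 1/2 | S1 => 1/4 * (x * x) | S2 => 1/12 * (x * (x * x))
  | R1 => 1/2 * (1 - x) | R2 => 1/2 * (x - x * x) | R3 => 1/4 * (x * x - x * (x * x))
  end.

Lemma Tbar0 : Tbar 0 = 1/2. Proof. unfold Tbar; destruct (Rlt_dec 0 1); lra. Qed.
Lemma Tbar1 : Tbar 1 = 1/4. Proof. unfold Tbar; destruct (Rlt_dec 1 1); try lra; destruct (Rlt_dec 1 (3/2)); lra. Qed.
Lemma Tbar32 : Tbar (3/2) = 1/6. Proof. unfold Tbar; destruct (Rlt_dec (3/2) 1); try lra; destruct (Rlt_dec (3/2) (3/2)); lra. Qed.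

Lemma vq_val o : vq (oquad o) = xv (exp (- mu / 2)) o.
Proof.
  set (x := exp (- mu / 2)).
  assert (E0 : exp_tail mu 0 = 1) by (unfold exp_tail; rewrite Rmult_0_r; apply exp_0).
  assert (E1 : exp_tail mu (1/2) = x) by (unfold exp_tail, x; f_equal; field).
  assert (E2 : exp_tail mu 1 = x * x) by (unfold exp_tail, x; rewrite <- exp_plus; f_equal; field).
  assert (E3 : exp_tail mu (3/2) = x * (x * x)) by (unfold exp_tail, x; rewrite <- !exp_plus; f_equal; field).
  assert (M1 : Rmax 0 1 = 1) by (apply Rmax_right; lra).
  assert (M2 : Rmax 1 (3/2) = 3/2) by (apply Rmax_right; lra).
  assert (M3 : Rmax 0 (1/2) = 1/2) by (apply Rmax_right; lra).
  assert (M4 : Rmax (1/2) 1 = 1) by (apply Rmax_right; lra).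
  assert (M5 : Rmax 1 (3/2) = 3/2) by (apply Rmax_right; lra).
  destruct o; unfold vq, tailv; simpl; rewrite ?M1, ?M2, ?M3, ?M4, ?E0, ?E1, ?E2, ?E3, ?Tbar0, ?Tbar1, ?Tbar32. all: field.
Qed.

Lemma sum_fam fam : fold_right Rplus 0 (map (fun b => Pr PS (bev PS X (quads b))) fam) =
  fold_right Rplus 0 (map (fun b => prodl (map (xv (exp (- mu / 2))) (ol b))) fam).
Proof. f_equal. apply map_ext. intros b. rewrite box_pr. f_equal. apply map_ext. apply vq_val. Qed.

Ltac fam_tac := repeat (apply Forall_cons || apply Forall_nil || apply FOP_cons || apply FOP_nil); try (split; reflexivity); try (unfold bcost; simpl; lra); try (intro HH; inversion HH).

Theorem part1 t : 0 <= t -> Pr PS (tilde_gt PS T Rs t) <= Tbar t.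
Proof. intros Ht.
  assert (Hx0 : 0 < exp (- mu / 2)) by apply exp_pos.
  assert (Hx1 : exp (- mu / 2) < 1) by (rewrite <- exp_0; apply exp_increasing; lra).
  set (x := exp (- mu / 2)) in *.
  unfold Tbar. destruct (Rlt_dec t 1).
  - pose proof (bound ((nil, S0) :: nil) t ltac:(fam_tac) ltac:(fam_tac) ltac:(fam_tac)) as H. rewrite sum_fam in H. simpl in H.
    fold x in H. lra.
  - destruct (Rlt_dec t (3/2)).
    + pose proof (bound ((nil, S0) :: (nil, S1) :: (R1 :: nil, S0) :: (R2 :: nil, S0) :: (R1 :: R1 :: nil, S0) :: nil) t ltac:(fam_tac) ltac:(fam_tac) ltac:(fam_tac)) as H.
      rewrite sum_fam in H. simpl in H. fold x in H.
      assert (0 <= (1 - x) * (1 - x)) by nra. nra.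
    + pose proof (bound ((nil, S0) :: (nil, S1) :: (nil, S2) :: (R1 :: nil, S0) :: (R1 :: nil, S1) ::
          (R2 :: nil, S0) :: (R3 :: nil, S0) :: (R1 :: R1 :: nil, S0) :: (R1 :: R2 :: nil, S0) ::
          (R2 :: R1 :: nil, S0) :: (R1 :: R1 :: R1 :: nil, S0) :: nil) t ltac:(fam_tac) ltac:(fam_tac) ltac:(fam_tac)) as H.
      rewrite sum_fam in H. simpl in H. fold x in H.
      assert (0 <= (1 - x) * (1 - x) * (5 + x)) by (apply Rmult_le_pos; nra). nra.
Qed.
End Part1.


Lemma atomP_all PS X i G lo hi : (forall a, pr PS X i a = G a) -> atomP PS X i lo hi = tailv G lo hi.
Proof. intros H. unfold atomP, tailv, posv. destruct lo; destruct hi; rewrite ?H; auto. Qed.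

Lemma atomP_nn PS X i G lo hi : (forall a, 0 <= a -> pr PS X i a = G a) -> nn lo -> nn hi ->
  atomP PS X i lo hi = tailv G lo hi.
Proof. intros H Hlo Hhi. unfold atomP, tailv, posv. destruct lo as [a|]; destruct hi as [b|]; simpl in *;
  rewrite ?H; auto. unfold Rmax; destruct (Rle_dec a b); lra. Qed.

Definition qr : Q := ((Some (9/10), None), (Some (4/5), Some (9/10))).
Definition qsu : Q := ((Some (-1/20), Some 0), (Some 0, None)).

Section Part2.
Variable PS : ProbSpace.
Variables T Rs : nat -> Omega PS -> Rbar.
Hypothesis Hset : reset_setup PS T Rs Tbar (dirac_tail (9/10)).
Let X := fun i : nat + nat => match i with inl k => T k | inr k => Rs k end.

Lemma HX2 : forall i, rv' PS (X i).
Proof. destruct Hset as [H1 [H2 _]]. intros [k|k]; simpl; auto. apply H1. apply H2. Qed.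
Lemma Hind2 : indep PS X.
Proof. apply Hset. Qed.

Definition GT (a : R) : R := if Rlt_dec a 0 then 1 else Tbar a.

Lemma prT2 j a : pr PS X (inl j) a = GT a.
Proof. unfold GT. destruct Hset as [H1 [_ [H _]]]. destruct (H j) as [Hn Hp]. destruct (Rlt_dec a 0).
  - unfold pr; simpl. apply Rle_antisym. apply Pr_le1, H1.
    rewrite <- (Rminus_0_r 1), <- Hn, <- Pr_compl by (apply meas_lt_const, H1).
    apply Pr_mono. apply meas_compl, meas_lt_const, H1. apply H1.
    intros w Hw. destruct (T j w); simpl in *; auto. lra.
  - apply Hp; lra. Qed.

Lemma prR2 j a : 0 <= a -> pr PS X (inr j) a = dirac_tail (9/10) a.
Proof. intros Ha. destruct Hset as [_ [_ [_ [H _]]]]. apply (H j). auto. Qed.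

Definition v2 (q : Q) : R := tailv GT (fst (fst q)) (snd (fst q)) * tailv (dirac_tail (9/10)) (fst (snd q)) (snd (snd q)).

Lemma v2r : v2 qr = 1/2.
Proof. unfold v2, tailv, qr, GT, Tbar, dirac_tail; simpl.
  rewrite Rmax_right by lra.
  repeat (destruct Rlt_dec; try lra). Qed.
Lemma v2s : v2 qsu = 1/2.
Proof. unfold v2, tailv, qsu, GT, Tbar, dirac_tail; simpl.
  rewrite Rmax_right by lra.
  repeat (destruct Rlt_dec; try lra). Qed.

Definition bk (k : nat) : list Q := repeat qr k ++ qsu :: nil.

Lemma nth_bk1 k j : (j < k)%nat -> nth j (bk k) dq = qr.
Proof. intros H. unfold bk. rewrite app_nth1 by (rewrite repeat_length; auto). apply nth_repeat_lt; auto. Qed.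
Lemma nth_bk2 k : nth k (bk k) dq = qsu.
Proof. unfold bk. rewrite app_nth2 by (rewrite repeat_length; auto). rewrite repeat_length, Nat.sub_diag; auto. Qed.
Lemma len_bk k : length (bk k) = S k.
Proof. unfold bk. rewrite length_app, repeat_length. simpl; lia. Qed.

Lemma bk_prob k : Pr PS (bev PS X (bk k)) = (1/2) ^ (S k).
Proof. rewrite (bev_prob PS X HX2 Hind2 (bk k) v2).
  - unfold bk. rewrite map_app, prodl_app.
    assert (E : prodl (map v2 (repeat qr k)) = (1/2)^k).
    { induction k. auto. simpl. rewrite v2r, IHk. ring. }
    rewrite E. simpl. rewrite v2s. ring.
  - intros j Hj. rewrite len_bk in Hj. destruct (Nat.eq_dec j k).
    + subst. rewrite nth_bk2. unfold v2. f_equal; [apply atomP_all; intros; apply prT2|].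
      apply atomP_nn. intros; apply prR2; auto. simpl; lra. simpl; auto.
    + rewrite nth_bk1 by lia. unfold v2. f_equal; [apply atomP_all; intros; apply prT2|]. apply atomP_nn. intros; apply prR2; auto. simpl; lra. simpl; lra.
Qed.

Lemma bk_tilde k w : bev PS X (bk k) w -> tilde_gt PS T Rs (4/5 * INR k - 1/20) w.
Proof. intros H. rewrite bev_iff, len_bk in H.
  assert (Hr : forall j, (j < k)%nat -> Rbar_lt (Fin (9/10)) (T j w) /\ Rbar_lt (Fin (4/5)) (Rs j w) /\ ~ Rbar_lt (Fin (9/10)) (Rs j w)).
  { intros j Hj. destruct (H j ltac:(lia)) as [H1 H2]. rewrite nth_bk1 in H1, H2 by auto.
    unfold qr, atom, posb, negb' in *; simpl in *. tauto. }
  destruct (H k ltac:(lia)) as [H1 H2]. rewrite nth_bk2 in H1, H2. unfold qsu, atom, posb, negb' in *; simpl in *.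
  exists k. split; [|split].
  - intros j Hj. destruct (Hr j Hj) as [A1 [A2 A3]]. destruct (T j w), (Rs j w); simpl in *; try tauto; lra.
  - destruct (T k w), (Rs k w); simpl in *; try tauto; lra.
  - assert (Hp : forall m, (m <= k)%nat -> exists s, Rbar_psum (fun j => Rs j w) m = Fin s /\ 4/5 * INR m <= s).
    { induction m; intros Hm. exists 0; simpl; split; auto; lra.
      destruct IHm as [s [E1 E2]]; [lia|]. destruct (Hr m ltac:(lia)) as [A1 [A2 A3]].
      destruct (Rs m w) as [r|] eqn:Er; simpl in A2, A3; [|tauto].
      exists (s + r). rewrite S_INR. simpl. rewrite E1, Er. simpl. split; auto. lra. }
    destruct (Hp k ltac:(lia)) as [s [E1 E2]]. rewrite E1. destruct (T k w); simpl in *; try tauto. lra.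
Qed.

Lemma tilde_mono t t' w : t <= t' -> tilde_gt PS T Rs t' w -> tilde_gt PS T Rs t w.
Proof. intros Htt [k [H1 [H2 H3]]]. exists k; repeat split; auto.
  destruct (Rbar_plus _ _); simpl in *; auto; lra. Qed.

Theorem part2 : ~ tilde_st_le PS T Rs Tbar.
Proof. intros Hle. specialize (Hle (3/2) ltac:(lra)). rewrite Tbar32 in Hle.
  assert (Hm : meas PS (tilde_gt PS T Rs (3/2))).
  { destruct Hset as [H1 [H2 _]]. apply meas_tilde; auto. }
  assert (Pr PS (fun w => bev PS X (bk 2) w \/ bev PS X (bk 3) w) <= Pr PS (tilde_gt PS T Rs (3/2))).
  { apply Pr_mono; auto. apply meas_or; apply meas_bev, HX2.
    intros w [Hw|Hw]; apply bk_tilde in Hw; eapply tilde_mono; eauto; simpl; lra. }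
  rewrite Pr_add, !bk_prob in H. simpl in H. lra.
  apply meas_bev, HX2. apply meas_bev, HX2.
  intros w Ha Hb. rewrite bev_iff, len_bk in Ha, Hb.
  destruct (Ha 2%nat ltac:(lia)) as [A1 _]. destruct (Hb 2%nat ltac:(lia)) as [B1 _].
  rewrite nth_bk2 in A1. rewrite nth_bk1 in B1 by lia.
  unfold qr, qsu, atom, posb, negb' in *; simpl in *. destruct (T 2%nat w); simpl in *; lra.
Qed.
End Part2.


Theorem mainTheorem15 :
  (forall mu : R, 0 < mu ->
     forall (S : ProbSpace) (T Rs : nat -> Omega S -> Rbar),
       reset_setup S T Rs Tbar (exp_tail mu) ->
       tilde_st_le S T Rs Tbar)
  /\
  (exists r : R, 0 < r /\
     forall (S : ProbSpace) (T Rs : nat -> Omega S -> Rbar),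
       reset_setup S T Rs Tbar (dirac_tail r) ->
       ~ tilde_st_le S T Rs Tbar).
Proof.
  split.
  - intros mu Hmu S T Rs Hset t Ht. apply (part1 S T Rs mu Hmu Hset t Ht).
  - exists (9/10). split. lra. intros S T Rs Hset. apply (part2 S T Rs Hset).
Qed.
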